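(* Let $q$ be a prime power, $k\ge1$ and $n\ge k+2$. There does not exist a Cameron-Liebler $k$-set of $\mathrm{AG}(n,q)$ with parameter $x=2$.
   Context: $\mathrm{AG}(n,q)$ is $\mathrm{PG}(n,q)$ with a hyperplane $\pi_\infty$ removed; affine points are points outside $\pi_\infty$, affine $k$-spaces are $k$-dimensional projective subspaces not contained in $\pi_\infty$. With $A_n$ the incidence matrix of affine points versus affine $k$-spaces, a set $\mathcal{L}$ of affine $k$-spaces is a Cameron-Liebler $k$-set of $\mathrm{AG}(n,q)$ if its characteristic vector lies in the real row space $\mathrm{Im}(A_n^T)$; its parameter is $|\mathcal{L}|/\left[{n\atop k}\right]_q$, where $\left[{a\atop b}\right]_q=\frac{(q^a-1)\cdots(q^{a-b+1}-1)}{(q^b-1)\cdots(q-1)}$. *)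

(* Defs.v *)
From HB Require Import structures.
From mathcomp Require Import all_boot all_order all_algebra all_field.
From mathcomp Require Import reals.
Set Implicit Arguments. Unset Strict Implicit. Unset Printing Implicit Defensive.
Import Order.TTheory GRing.Theory Num.Theory.
Local Open Scope ring_scope.

(* Model of AG(n,q): points are row vectors 'rV[F]_n over a finite field F
   with q = #|F| elements. *)
Definition affine_kspaces (F : finFieldType) (n k : nat) : {set {set 'rV[F]_n}} :=
  [set S | [exists v : 'rV[F]_n, exists U : 'M[F]_n,
      (\rank U == k) && (S == [set x | (x - v <= U)%MS])]].

Definition gauss_binom (R : realType) (q a b : nat) : R :=
  (\prod_(i < b) ((q%:R : R) ^+ (a - i) - 1)) / (\prod_(i < b) ((q%:R : R) ^+ i.+1 - 1)).

(* Cameron-Liebler k-set: a set L of affine k-spaces whose characteristic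
   vector (indexed by affine k-spaces) lies in the real row space Im(A_n^T)
   of the point / k-space incidence matrix A_n, i.e. chi_L = A_n^T y for
   some real vector y indexed by the affine points. *)
Definition is_CL_kset (R : realType) (F : finFieldType) (n k : nat)
    (L : {set {set 'rV[F]_n}}) : Prop :=
  L \subset affine_kspaces F n k /\
  exists y : 'rV[F]_n -> R,
    forall K, K \in affine_kspaces F n k ->
      ((K \in L)%:R : R) = \sum_(P in K) y P.

Definition CL_parameter (R : realType) (F : finFieldType) (n k : nat)
    (L : {set {set 'rV[F]_n}}) : R :=
  (#|L|%:R : R) / gauss_binom R #|F| n k.

(* Main.v *)
Require Import Defs.
From HB Require Import structures.
From mathcomp Require Import all_boot all_order all_algebra all_field.
From mathcomp Require Import reals.
From mathcomp Require Import zify.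
Set Implicit Arguments. Unset Strict Implicit. Unset Printing Implicit Defensive.
Import Order.TTheory GRing.Theory Num.Theory.
Local Open Scope ring_scope.
Section Card.
Variable F : finFieldType.

Lemma card_fr m n : (m <= n)%N ->
  #|[pred A : 'M[F]_(m, n) | \rank A == m]| = (\prod_(i < m) (#|F| ^ n - #|F| ^ i))%N.
Proof.
set p := #|F|.
pose fr m := [pred A : 'M[F]_(m, n) | \rank A == m].
rewrite -/(fr m).
elim: m => [_ | m IHm /ltnW-le_mn].
  rewrite big_ord0 (@eq_card1 _ (0 : 'M_(0, n))) //= => A.
  by rewrite flatmx0 !inE mxrank.unlock !eqxx.
rewrite big_ord_recr /= -{}IHm //.
rewrite -sum_nat_const /= -sum1_card -add1n.
rewrite (partition_big dsubmx (fr m)) /= => [|A]; last first.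
  rewrite !inE -{1}(vsubmxK A); move: {A}(_ A) (_ A) => Ad Au Afull.
  rewrite eqn_leq rank_leq_row -(leq_add2l (\rank Au)) -mxrank_sum_cap.
  rewrite {1 3}[@mxrank]lock addsmxE (eqnP Afull) -lock -addnA.
  by rewrite leq_add ?rank_leq_row ?leq_addr.
apply: eq_bigr => A rAm; rewrite (reindex (col_mx^~ A)) /=; last first.
  exists usubmx => [v _ | vA]; first by rewrite col_mxKu.
  by case/andP=> _ /eqP <-; rewrite vsubmxK.
transitivity #|~: [set v *m A | v in 'rV_m]|; last first.
  rewrite cardsCs setCK card_imset ?card_mx ?card_ord ?mul1n //.
  have [B AB1] := row_freeP rAm; apply: can_inj (mulmx^~ B) _ => v.
  by rewrite -mulmxA AB1 mulmx1.
rewrite -sum1_card; apply: eq_bigl => v; rewrite !inE col_mxKd eqxx.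
rewrite andbT eqn_leq rank_leq_row /= -(leq_add2r (\rank (v :&: A)%MS)).
rewrite -addsmxE mxrank_sum_cap (eqnP rAm) addnAC leq_add2r.
rewrite (ltn_leqif (mxrank_leqif_sup _)) ?capmxSl // sub_capmx submx_refl.
by congr (~~ _); apply/submxP/imsetP=> [] [u]; exists u.
Qed.
End Card.
Section Dirs.
Variable F : finFieldType.
Variable n : nat.
Definition sp m (A : 'M[F]_(m, n)) : {set 'rV[F]_n} := [set x | (x <= A)%MS].

Lemma sp_eq m1 m2 (A : 'M_(m1,n)) (B : 'M_(m2,n)) : (A == B)%MS -> sp A = sp B.
Proof.
move=> /andP[AB BA]; apply/setP=> x; rewrite !inE.
by apply/idP/idP => h; [exact: submx_trans h AB | exact: submx_trans h BA].
Qed.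

Lemma sp_sub m1 m2 (A : 'M_(m1,n)) (B : 'M_(m2,n)) : sp A \subset sp B -> (A <= B)%MS.
Proof.
move=> /subsetP h; apply/row_subP => i.
by have := h (row i A); rewrite !inE row_sub => /(_ isT).
Qed.

Definition frp k m := [pred A : 'M[F]_(k, m) | \rank A == k].

Lemma card_dirs k : #|frp k n| = (#|[set sp A | A in frp k n]| * #|frp k k|)%N.
Proof.
rewrite -[#|frp k n|]sum1_card.
rewrite (partition_big_imset (@sp k) (frp k n)) /= -sum_nat_const.
apply: eq_bigr => D /imsetP[A0 HA0 ->].
have rA0 : row_free A0 by rewrite /row_free; move: HA0; rewrite inE.
rewrite sum1_card.
transitivity #|[set G *m A0 | G in frp k k]|; last first.
  rewrite card_imset //; exact: row_free_inj.
apply: eq_card => A; rewrite unfold_in /= inE /=.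
apply/andP/imsetP => [[rA /eqP eA] | [G rG ->]].
  have sA : (A <= A0)%MS by apply: sp_sub; rewrite eA.
  exists (A *m pinvmx A0); last by rewrite mulmxKpV.
  by rewrite unfold_in /= -(mxrankMfree _ rA0) mulmxKpV.
have rG' : \rank G = k by move: rG; rewrite unfold_in /= => /eqP.
split.
  by rewrite mxrankMfree // rG'.
apply/eqP/sp_eq.
have s1 : (G *m A0 <= A0)%MS by exact: submxMl.
rewrite s1 /=.
have := mxrank_leqif_sup s1; rewrite mxrankMfree // rG'.
have -> : \rank A0 = k by move: HA0; rewrite unfold_in /= => /eqP.
by case=> _ <-.
Qed.
End Dirs.
Lemma gauss_count (R : realType) (q n k N : nat) : (1 < q)%N -> (k <= n)%N ->
  (N * \prod_(i < k) (q ^ k - q ^ i))%N = (\prod_(i < k) (q ^ n - q ^ i))%N ->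
  (N%:R : R) = gauss_binom R q n k.
Proof.
move=> q1 kn HN.
have qp : (0 < q)%N by apply: ltnW.
have key : forall m, (k <= m)%N -> ((\prod_(i < k) (q ^ m - q ^ i))%N%:R : R)
   = \prod_(i < k) (q%:R : R) ^+ i * \prod_(i < k) ((q%:R : R) ^+ (m - i) - 1).
  move=> m km; rewrite natr_prod -big_split /=; apply: eq_bigr => i _.
  have im : (i <= m)%N by apply: leq_trans (ltnW (ltn_ord i)) km.
  rewrite natrB ?leq_pexp2l // mulrBr mulr1 -!natrX -natrM -expnD subnKC //.
have HR := congr1 (fun x : nat => (x%:R : R)) HN; simpl in HR.
rewrite natrM !key // in HR.
have rev : \prod_(i < k) ((q%:R : R) ^+ (k - i) - 1) = \prod_(i < k) ((q%:R : R) ^+ i.+1 - 1).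
  rewrite (reindex_inj rev_ord_inj) /=; apply: eq_bigr => i _.
  by rewrite subKn.
rewrite rev in HR.
have nz1 : \prod_(i < k) (q%:R : R) ^+ i != 0.
  by rewrite prodf_seq_neq0; apply/allP => i _ /=; rewrite expf_neq0 // pnatr_eq0 -lt0n.
have nz2 : \prod_(i < k) ((q%:R : R) ^+ i.+1 - 1) != 0.
  rewrite prodf_seq_neq0; apply/allP => i _ /=; rewrite subr_eq0.
  rewrite -natrX pnatr_eq1 -(expn0 q) (inj_eq (expnI q1)) //.
rewrite /gauss_binom; apply: (mulIf nz2); rewrite divfK //.
by apply: (mulfI nz1); rewrite -HR mulrCA.
Qed.
Section Geo.
Variable F : finFieldType.
Variable n : nat.
Implicit Types (U S W : 'M[F]_n) (v a b e : 'rV[F]_n).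

Definition tr v U : {set 'rV[F]_n} := [set x | (x - v <= U)%MS].

Lemma subB_mx m (M : 'M[F]_(m, n)) (u w : 'rV[F]_n) :
  (u <= M)%MS -> (w <= M)%MS -> (u - w <= M)%MS.
Proof. by move=> hu hw; rewrite addmx_sub // eqmx_opp. Qed.

Lemma tr_mem v U : v \in tr v U.
Proof. by rewrite inE subrr sub0mx. Qed.

Lemma tr_eq a b U : (a - b <= U)%MS -> tr a U = tr b U.
Proof.
move=> h; apply/setP => x; rewrite !inE; apply/idP/idP => hx.
  by have := addmx_sub hx h; rewrite addrA subrK.
have h' : (b - a <= U)%MS by rewrite -opprB eqmx_opp.
by have := addmx_sub hx h'; rewrite addrA subrK.
Qed.

Lemma tr_eqE a b U : tr a U = tr b U -> (a - b <= U)%MS.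
Proof. by move=> h; have := tr_mem a U; rewrite h inE. Qed.

Lemma tr_eqmx v U W : (U == W)%MS -> tr v U = tr v W.
Proof.
move=> /andP[h1 h2]; apply/setP => x; rewrite !inE; apply/idP/idP => hx.
  exact: submx_trans hx h1.
exact: submx_trans hx h2.
Qed.

Lemma rank_adds_notin U (v : 'rV[F]_n) : ~~ (v <= U)%MS -> \rank (U + v)%MS = (\rank U).+1.
Proof.
move=> hv.
have v0 : v != 0 by apply: contra hv => /eqP ->; exact: sub0mx.
have := mxrank_sum_cap U v; rewrite rank_rV v0 /=.
have [le1 eq1] := mxrank_leqif_sup (capmxSr U v).
have c0 : \rank (U :&: v)%MS = 0%N.
  move: le1 eq1; rewrite rank_rV v0 sub_capmx submx_refl andbT (negbTE hv).
  by case: (\rank _) => [|[|]].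
by rewrite c0 addn0 addn1.
Qed.

Lemma exists_sub_rank (M : 'M[F]_n) r : (r <= \rank M)%N ->
  exists U : 'M[F]_n, (U <= M)%MS /\ \rank U = r.
Proof.
elim: r => [_|r IH hr].
  by exists 0; rewrite sub0mx mxrank0.
have [U [UM rU]] := IH (ltnW hr).
have : ~~ (M <= U)%MS.
  by apply: contraL hr => /mxrankS; rewrite rU -ltnNge.
case/row_subPn => i hi.
exists (U + row i M)%MS; split.
  by rewrite addsmx_sub UM row_sub.
by rewrite rank_adds_notin // rU.
Qed.

Lemma tr_sub_in p e U S : (U <= S)%MS -> (p - e <= S)%MS -> tr p U \subset tr e S.
Proof.
move=> US pe; apply/subsetP => x; rewrite !inE => hx.
have := addmx_sub (submx_trans hx US) pe; by rewrite addrA subrK.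
Qed.

Section CL.
Variable R : realType.
Variable k : nat.
Variable L : {set {set 'rV[F]_n}}.
Variable y : 'rV[F]_n -> R.
Hypothesis Hy : forall K, K \in affine_kspaces F n k ->
      ((K \in L)%:R : R) = \sum_(P in K) y P.

Definition Blocks U (E : {set 'rV[F]_n}) := [set tr p U | p in E].
Definition cnt U E := #|L :&: Blocks U E|.

Lemma tr_aks v U : \rank U = k -> tr v U \in affine_kspaces F n k.
Proof.
move=> rU; rewrite inE; apply/existsP; exists v; apply/existsP; exists U.
by rewrite rU !eqxx.
Qed.

Lemma sum_ind (X : {set {set 'rV[F]_n}}) :
  \sum_(B in X) ((B \in L)%:R : R) = (#|L :&: X|)%:R.
Proof.
rewrite -natr_sum; congr (_%:R).
rewrite -sum1_card big_mkcond [RHS]big_mkcond /=; apply: eq_bigr => B _.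
by rewrite !inE; case: (B \in X); case: (B \in L).
Qed.

Lemma step1 U S e : \rank U = k -> (U <= S)%MS ->
  ((cnt U (tr e S))%:R : R) = \sum_(P in tr e S) y P.
Proof.
move=> rU US.
rewrite (partition_big_imset (fun P => tr P U)) /= -sum_ind /cnt.
apply: eq_bigr => B /imsetP[p hp ->].
have pe : (p - e <= S)%MS by move: hp; rewrite inE.
rewrite Hy ?tr_aks //; apply: eq_bigl => P.
apply/idP/andP => [hP | [hP /eqP h]].
  split; first exact: (subsetP (tr_sub_in US pe)) hP.
  by apply/eqP/tr_eq; move: hP; rewrite inE.
rewrite inE; exact: tr_eqE h.
Qed.


Definition Tot : {set 'rV[F]_n} := tr 0 (1%:M : 'M[F]_n).

Lemma cnt_indep U U' S e : \rank U = k -> \rank U' = k -> (U <= S)%MS -> (U' <= S)%MS ->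
  cnt U (tr e S) = cnt U' (tr e S).
Proof.
move=> rU rU' US US'; apply/eqP; rewrite -(eqr_nat R) (step1 e rU US) (step1 e rU' US').
exact: eqxx.
Qed.

Definition dirof (K : {set 'rV[F]_n}) : {set 'rV[F]_n} := [set x - z | x in K, z in K].

Lemma dirof_tr v U : dirof (tr v U) = sp U.
Proof.
apply/setP => u; rewrite inE; apply/imset2P/idP => [[x z hx hz ->] | hu].
  move: hx hz; rewrite !inE => hx hz.
  have h := subB_mx hx hz.
  have -> : x - z = (x - v) - (z - v) by rewrite opprB addrA subrK.
  exact: h.
exists (u + v) v; rewrite ?inE ?addrK ?subrr ?sub0mx //.
Qed.

Hypothesis HL : L \subset affine_kspaces F n k.

Lemma aksP K : K \in affine_kspaces F n k -> exists v U, \rank U = k /\ K = tr v U.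
Proof.
rewrite inE => /existsP[v /existsP[U /andP[/eqP rU /eqP ->]]].
by exists v, U.
Qed.

Lemma base_of U : \rank U = k -> exists A : 'M[F]_(k, n), \rank A = k /\ (A == U)%MS.
Proof.
move=> <-; exists (row_base U); split; first exact: eqP (row_base_free U).
by apply/eqmxP; exact: eq_row_base.
Qed.

Lemma cardL : (k <= n)%N ->
  #|L| = (#|[set sp A | A in frp F k n]| * cnt (pid_mx k) Tot)%N.
Proof.
move=> kn.
have rP : \rank (pid_mx k : 'M[F]_n) = k by rewrite rank_pid_mx.
rewrite -sum1_card (partition_big dirof (mem [set sp A | A in frp F k n])) /=; last first.
  move=> K KL; have [v [U [rU ->]]] := aksP (subsetP HL K KL).
  rewrite dirof_tr; have [A [rA AU]] := base_of rU.
  apply/imsetP; exists A; first by rewrite unfold_in /= rA.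
  by apply: sp_eq; case/andP: AU => h1 h2; rewrite h1 h2.
rewrite -sum_nat_const; apply: eq_bigr => D /imsetP[A hA ->].
have rA : \rank A = k by move: hA; rewrite unfold_in /= => /eqP.
rewrite (@cnt_indep _ <<A>>%MS) ?mxrank_gen ?submx1 // /cnt sum1_card.
apply: eq_card => K; rewrite unfold_in /= !inE.
apply/andP/andP => [[KL /eqP dK] | [KL /imsetP[p _ eK]]].
  split => //; have [v [U [rU eK]]] := aksP (subsetP HL K KL).
  move: dK; rewrite eK dirof_tr => dK.
  apply/imsetP; exists v; first by rewrite /Tot inE submx1.
  apply: tr_eqmx; apply/andP; split.
    by rewrite genmxE; apply: sp_sub; rewrite dK.
  by rewrite genmxE; apply: sp_sub; rewrite dK.
split => //.
rewrite eK dirof_tr; apply/eqP/sp_eq.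
by apply/eqmxP; exact: genmxE.
Qed.

Lemma in_Tot v : v \in Tot.
Proof. by rewrite /Tot inE submx1. Qed.

Lemma blocks_sub U E : Blocks U E \subset Blocks U Tot.
Proof.
apply/subsetP => B /imsetP[p _ ->]; apply/imsetP; exists p => //; exact: in_Tot.
Qed.

Lemma cnt_le U E : (cnt U E <= cnt U Tot)%N.
Proof. by apply: subset_leq_card; apply: setIS; exact: blocks_sub. Qed.

Lemma diff_sub2 S a b e : (a - e <= S)%MS -> (b - e <= S)%MS -> (b - a <= S)%MS.
Proof.
move=> ha hb; have := subB_mx hb ha.
by rewrite opprB addrA subrK.
Qed.

Hypothesis H2 : forall U, \rank U = k -> cnt U Tot = 2%N.

Lemma wit U : \rank U = k ->
  exists a b, ~~ (b - a <= U)%MS /\ tr a U \in L /\ tr b U \in L.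
Proof.
move=> rU; have /eqP/cards2P[M1 [M2 [neq eqs]]] := H2 rU.
have h1 : M1 \in L :&: Blocks U Tot by rewrite /cnt in eqs; rewrite eqs !inE eqxx.
have h2 : M2 \in L :&: Blocks U Tot by rewrite /cnt in eqs; rewrite eqs !inE eqxx orbT.
move: h1 h2; rewrite !inE => /andP[L1 /imsetP[a _ e1]] /andP[L2 /imsetP[b _ e2]].
exists a, b; split; last by rewrite -e1 -e2.
apply: contra neq => h; rewrite e1 e2; apply/eqP; apply: esym; exact: tr_eq.
Qed.

Lemma in_sub U S e a : \rank U = k -> (U <= S)%MS -> cnt U (tr e S) = 2%N ->
  tr a U \in L -> (a - e <= S)%MS.
Proof.
move=> rU US c2 aL.
have eqset : L :&: Blocks U (tr e S) = L :&: Blocks U Tot.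
  apply/eqP; rewrite eqEcard setIS ?blocks_sub //=.
  by have := H2 rU; rewrite /cnt in c2 *; rewrite c2 => ->.
have : tr a U \in L :&: Blocks U (tr e S).
  by rewrite eqset inE aL /=; apply/imsetP; exists a => //; exact: in_Tot.
rewrite inE => /andP[_ /imsetP[p hp ep]].
move: hp; rewrite inE => hp.
have := tr_eqE ep => hap.
have := addmx_sub (submx_trans hap US) hp.
by rewrite addrA subrK.
Qed.

Lemma cnt2_of U S e a b : \rank U = k -> (U <= S)%MS -> tr a U \in L -> tr b U \in L ->
  ~~ (b - a <= U)%MS -> (a - e <= S)%MS -> (b - e <= S)%MS -> cnt U (tr e S) = 2%N.
Proof.
move=> rU US aL bL nab ae be; apply/eqP; rewrite eqn_leq -{1}(H2 rU) cnt_le /=.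
have neq : tr a U != tr b U.
  apply: contra nab => /eqP /tr_eqE h.
  by rewrite -opprB eqmx_opp.
have c : #|[set tr a U; tr b U]| = 2%N by rewrite cards2 neq.
rewrite -c /cnt; apply: subset_leq_card; apply/subsetP => B.
rewrite !inE => /orP[] /eqP ->; rewrite ?aL ?bL /=; apply/imsetP.
  by exists a; rewrite // inE.
by exists b; rewrite // inE.
Qed.

Lemma uq U W1 W2 e1 e2 : \rank U = k -> (U <= W1)%MS -> (U <= W2)%MS ->
  \rank W1 = k.+1 -> cnt U (tr e1 W1) = 2%N -> cnt U (tr e2 W2) = 2%N -> (W1 <= W2)%MS.
Proof.
move=> rU U1 U2 r1 c1 c2.
have [a [b [nab [aL bL]]]] := wit rU.
have d1 : (b - a <= W1)%MS by apply: (@diff_sub2 _ _ _ e1); apply: in_sub c1 _.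
have d2 : (b - a <= W2)%MS by apply: (@diff_sub2 _ _ _ e2); apply: in_sub c2 _.
have rX : \rank (U + (b - a))%MS = k.+1 by rewrite rank_adds_notin // rU.
have X1 : (U + (b - a) <= W1)%MS by rewrite addsmx_sub U1 d1.
have X2 : (U + (b - a) <= W2)%MS by rewrite addsmx_sub U2 d2.
have := (mxrank_leqif_sup X1).2; rewrite rX r1 eqxx => /esym h.
exact: submx_trans h X2.
Qed.

Lemma contra2 : (1 <= k)%N -> (k + 2 <= n)%N -> False.
Proof.
move=> k1 kn.
pose U0 : 'M[F]_n := pid_mx k.
have rU0 : \rank U0 = k by rewrite rank_pid_mx //; lia.
have [a [b [nab [aL bL]]]] := wit rU0.
pose w := b - a.
pose W := (U0 + w)%MS.
have rW : \rank W = k.+1 by rewrite rank_adds_notin // rU0.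
have : ~~ (1%:M <= W)%MS.
  apply/negP => h; have := mxrankS h; rewrite mxrank1 rW; lia.
case/row_subPn => i hz.
pose z : 'rV[F]_n := row i 1%:M.
pose D := (W + z)%MS.
have rD : \rank D = k.+2 by rewrite rank_adds_notin // rW.
have WD : (W <= D)%MS by exact: addsmxSl.
have U0W : (U0 <= W)%MS by exact: addsmxSl.
have U0D : (U0 <= D)%MS by exact: submx_trans U0W WD.
have zD : (z <= D)%MS by exact: addsmxSr.
have wW : (w <= W)%MS by exact: addsmxSr.
have cG0 : cnt U0 (tr a D) = 2%N.
  apply: (cnt2_of rU0 U0D aL bL nab); first by rewrite subrr sub0mx.
  exact: submx_trans wW WD.
have cG : forall U, \rank U = k -> (U <= D)%MS -> cnt U (tr a D) = 2%N.
  by move=> U rU UD; rewrite (cnt_indep a rU rU0 UD U0D).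
have hk : (k.-1 <= \rank U0)%N by rewrite rU0 leq_pred.
have [T [TU0 rT]] := exists_sub_rank hk.
have zT : ~~ (z <= T)%MS.
  by apply: contra hz => h; exact: submx_trans h (submx_trans TU0 U0W).
pose U2 := (T + z)%MS.
have rU2 : \rank U2 = k by rewrite rank_adds_notin // rT prednK.
have U2D : (U2 <= D)%MS by rewrite addsmx_sub zD andbT (submx_trans TU0 U0D).
have c2G := cG _ rU2 U2D.
have [a2 [b2 [nab2 [aL2 bL2]]]] := wit rU2.
have d2D : (b2 - a2 <= D)%MS.
  apply: (@diff_sub2 _ _ _ a); exact: in_sub rU2 U2D c2G _.
pose W2 := (U2 + (b2 - a2))%MS.
have rW2 : \rank W2 = k.+1 by rewrite rank_adds_notin // rU2.
have W2D : (W2 <= D)%MS by rewrite addsmx_sub U2D d2D.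
have U2W2 : (U2 <= W2)%MS by exact: addsmxSl.
have cW2 : cnt U2 (tr a2 W2) = 2%N.
  apply: (cnt2_of rU2 U2W2 aL2 bL2 nab2); first by rewrite subrr sub0mx.
  exact: addsmxSr.
have cW : cnt U0 (tr a W) = 2%N.
  apply: (cnt2_of rU0 U0W aL bL nab); first by rewrite subrr sub0mx.
  exact: wW.
have hX : (k <= \rank (W :&: W2)%MS)%N.
  have := mxrank_sum_cap W W2.
  have := @mxrankS _ _ _ _ (W + W2)%MS D; rewrite addsmx_sub WD W2D /= => /(_ isT).
  rewrite rD rW rW2 => h1 h2.
  move: h1 h2; move: (\rank (W + W2)%MS) (\rank (W :&: W2)%MS) => x1 x2.
  clear; lia.
have [U [UX rU]] := exists_sub_rank hX.
have UW : (U <= W)%MS by exact: submx_trans UX (capmxSl _ _).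
have UW2 : (U <= W2)%MS by exact: submx_trans UX (capmxSr _ _).
have cUW : cnt U (tr a W) = 2%N by rewrite (cnt_indep a rU rU0 UW U0W).
have cUW2 : cnt U (tr a2 W2) = 2%N by rewrite (cnt_indep a2 rU rU2 UW2 U2W2).
have h := uq rU UW2 UW rW2 cUW2 cUW.
have zW2 : (z <= W2)%MS by exact: submx_trans (addsmxSr T z) U2W2.
by move: hz; rewrite (submx_trans zW2 h).
Qed.

End CL.
End Geo.

Unset Implicit Arguments.

Theorem corollary6p16 (R : realType) (F : finFieldType) (n k : nat) :
  (1 <= k)%N -> (k + 2 <= n)%N ->
  ~ (exists L : {set {set 'rV[F]_n}},
        @is_CL_kset R F n k L /\ @CL_parameter R F n k L = 2).
Proof.
move=> k1 kn [L [[HL [y Hy]] Hx]].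
have kn' : (k <= n)%N by apply: leq_trans kn; rewrite leq_addr.
have rP : \rank (pid_mx k : 'M[F]_n) = k by rewrite rank_pid_mx.
have HcL := cardL Hy HL kn'.
set N := #|[set sp A | A in frp F k n]| in HcL.
set s := cnt L (pid_mx k) (Tot F n) in HcL.
have gN : gauss_binom R #|F| n k = N%:R.
  symmetry; apply: gauss_count => //; first exact: card_finNzRing_gt1.
  have h1 := card_dirs F n k.
  rewrite /frp (card_fr F kn') (card_fr F (leqnn k)) in h1.
  by rewrite -h1.
move: Hx; rewrite /CL_parameter HcL natrM gN.
have [N0|Nn0] := eqVneq N 0%N.
  by rewrite N0 mul0r mul0r => /esym/eqP; rewrite pnatr_eq0.
rewrite mulrC mulKf ?pnatr_eq0 // => hs.
have s2 : s = 2%N by apply/eqP; rewrite -(eqr_nat R) hs.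
apply: (contra2 Hy HL _ k1 kn) => U rU.
rewrite /Tot (cnt_indep Hy 0 rU rP (submx1 _) (submx1 _)).
exact: s2.
Qed.
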